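(* Let $r\ge 1$ and $q\ge 4$ be integers, and let $G$ be a minimal graph in $H_v(2_r;q-1)$. Then $$F_v(2_r;q-1)\ge F_v(2_r;q)+\alpha(G)-1.$$
   Context: All graphs are finite, simple and undirected. $\mathrm{cl}(G)$ is the clique number and $\alpha(G)$ the independence number of $G$. $G\overset{v}{\to}(2_r)$ means that in every partition of $V(G)$ into $r$ pairwise disjoint parts some part contains an edge (equivalently $\chi(G)\ge r+1$). $H_v(2_r;q)$ is the set of graphs $G$ with $G\overset{v}{\to}(2_r)$ and $\mathrm{cl}(G)<q$; $F_v(2_r;q)=\min\{|V(G)|:G\in H_v(2_r;q)\}$ (which exists iff $q\ge 3$). A graph $G_0$ in a nonempty set $\mathcal M$ of graphs is minimal in $\mathcal M$ if $|V(G_0)|=\min\{|V(G)|:G\in\mathcal M\}$. *)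

(* Defs.v *)
From mathcomp Require Import all_boot.
From Stdlib Require Import ClassicalEpsilon.
Set Implicit Arguments. Unset Strict Implicit. Unset Printing Implicit Defensive.

Definition simple_graph (T : finType) (e : rel T) : Prop :=
  symmetric e /\ irreflexive e.

Definition is_clique (T : finType) (e : rel T) (A : {set T}) : bool :=
  [forall x in A, forall y in A, (x != y) ==> e x y].

Definition is_indep (T : finType) (e : rel T) (A : {set T}) : bool :=
  [forall x in A, forall y in A, ~~ e x y].

Definition clique_number (T : finType) (e : rel T) : nat :=
  \max_(A : {set T} | is_clique e A) #|A|.

Definition alpha (T : finType) (e : rel T) : nat :=
  \max_(A : {set T} | is_indep e A) #|A|.

(* G -v-> (2_r): for every partition of V(G) into r (possibly empty)
   pairwise disjoint parts, encoded by a part-assignment f : T -> 'I_r,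
   some part contains an edge. *)
Definition varrow (r : nat) (T : finType) (e : rel T) : Prop :=
  forall f : T -> 'I_r, exists x y, e x y /\ f x = f y.

Definition inHv (r q : nat) (T : finType) (e : rel T) : Prop :=
  simple_graph e /\ varrow r e /\ clique_number e < q.

Definition hasHv (r q n : nat) : Prop :=
  exists e : rel 'I_n, inHv r q e.

Definition hasHvb (r q : nat) : pred nat :=
  fun n => if excluded_middle_informative (hasHv r q n) then true else false.

(* F_v(2_r; q) = min number of vertices of a graph in H_v(2_r; q)
   (set to 0 by convention when H_v(2_r; q) is empty, i.e. q <= 2). *)
Definition Fv (r q : nat) : nat :=
  match excluded_middle_informative (exists n, hasHvb r q n) with
  | left h => ex_minn h
  | right _ => 0
  end.

(* Main.v *)
Require Import Defs.
From mathcomp Require Import all_boot.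
From Stdlib Require Import ClassicalEpsilon.
Set Implicit Arguments. Unset Strict Implicit. Unset Printing Implicit Defensive.

Lemma Fv_le r q n : hasHv r q n -> Fv r q <= n.
Proof.
move=> H; rewrite /Fv; case: excluded_middle_informative => [h|hn].
  case: ex_minnP => m _ Hm; apply: Hm.
  by rewrite /hasHvb; case: excluded_middle_informative.
exfalso; apply: hn; exists n.
by rewrite /hasHvb; case: excluded_middle_informative.
Qed.

Lemma clique_le (T T' : finType) (e : rel T) (e' : rel T') :
  (forall B : {set T'}, is_clique e' B -> exists2 C : {set T}, is_clique e C & #|B| <= #|C|) ->
  clique_number e' <= clique_number e.
Proof.
move=> H; apply/bigmax_leqP => B /H [C HC HBC].
by apply: leq_trans HBC _; apply: leq_bigmax_cond.
Qed.

Lemma transport r q (T : finType) (e : rel T) : inHv r q e -> hasHv r q #|T|.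
Proof.
case=> [[Hs Hi] [Hv Hc]].
pose e' := fun i j : 'I_#|T| => e (enum_val i) (enum_val j).
exists e'; split; [split|split].
- by move=> i j; rewrite /e' Hs.
- by move=> i; rewrite /e' Hi.
- move=> f; have [x [y [Hxy Hf]]] := Hv (fun x => f (enum_rank x)).
  by exists (enum_rank x), (enum_rank y); rewrite /e' !enum_rankK.
- apply: leq_ltn_trans Hc; apply: clique_le => B HB.
  exists (enum_val @: B); last by rewrite card_imset //; apply: enum_val_inj.
  apply/forallP => x; apply/implyP => /imsetP [i Hi0 ->].
  apply/forallP => y; apply/implyP => /imsetP [j Hj ->].
  apply/implyP => Hne.
  have := forallP HB i; move/implyP/(_ Hi0)/forallP/(_ j)/implyP/(_ Hj)/implyP; apply.
  by apply: contra Hne => /eqP ->.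
Qed.
Section C.
Variables (T : finType) (e : rel T) (A : {set T}).
Local Notation S := {x : T | x \notin A}.
Definition e' (o1 o2 : option S) : bool :=
  match o1, o2 with
  | Some x, Some y => e (val x) (val y)
  | None, Some _ | Some _, None => true
  | None, None => false
  end.

Lemma cardS : #|{: S}| + #|A| = #|T|.
Proof.
rewrite card_sig addnC -(cardC A); congr (_ + _); apply: eq_card => x //.
Qed.

Lemma new_graph r q : is_indep e A -> inHv r q.-1 e -> 1 < q.-1 -> inHv r q e'.
Proof.
move=> HA [[Hs Hi] [Hv Hc]] Hq.
split; [split|split].
- by case=> [x|] [y|] //=; rewrite Hs.
- by case=> [x|] //=; rewrite Hi.
- move=> f; have [x [y [Hxy Hf]]] := Hv (fun x => f (insub x)).
  exists (insub x), (insub y); split => //.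
  case: insubP => [sx Hx Ex|Hx]; case: insubP => [sy Hy Ey|Hy] //=.
  + by rewrite Ex Ey.
  + exfalso; move: Hx Hy; rewrite !negbK => Hx Hy.
    by move: (forallP HA x) => /implyP/(_ Hx)/forallP/(_ y)/implyP/(_ Hy); rewrite Hxy.
- suff H : clique_number e' <= q.-1.
    apply: leq_ltn_trans H _; rewrite ltn_predL; by case: q Hq Hc.
  apply/bigmax_leqP => B HB.
  pose C := [set x : T | (x \notin A) && (insub x \in B)].
  have HC : is_clique e C.
    apply/forallP => x; apply/implyP; rewrite inE => /andP [Hx Bx].
    apply/forallP => y; apply/implyP; rewrite inE => /andP [Hy By].
    apply/implyP => Hne.
    move: (forallP HB (insub x)) => /implyP/(_ Bx)/forallP/(_ (insub y))/implyP/(_ By).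
    rewrite (insubT (fun z => z \notin A) Hx) (insubT (fun z => z \notin A) Hy) /=.
    move/implyP; apply; apply: contra Hne => /eqP [->] //.
  have HCc : #|C| <= (q.-1).-1.
    rewrite -ltnS (ltn_predK Hq); apply: leq_ltn_trans Hc.
    exact: (@leq_bigmax_cond _ (fun X : {set T} => is_clique e X) (fun X : {set T} => #|X|) C HC).
  have HBC : #|B :\ None| <= #|C|.
    apply: leq_trans (leq_imset_card (fun x : T => insub x : option S) C).
    apply: subset_leq_card; apply/subsetP => o; rewrite !inE; case: o => [s|] //=. move=> Bs.
    apply/imsetP; exists (val s); last by rewrite valK.
    by rewrite inE valK Bs (valP s).
  rewrite (cardsD1 None B).
  apply: leq_trans (leq_add (leq_b1 _) (leq_trans HBC HCc)) _.
  by rewrite add1n (ltn_predK Hq).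
Qed.
End C.
Theorem lemma2p1 (r q : nat) (hr : 1 <= r) (hq : 4 <= q)
  (T : finType) (e : rel T)
  (HG : inHv r q.-1 e) (Hmin : #|T| = Fv r q.-1) :
  Fv r q + alpha e - 1 <= Fv r q.-1.
Proof.
have [A HA Hal] : exists2 A, is_indep e A & alpha e = #|A|.
  have H0 : 0 < #|[pred X : {set T} | is_indep e X]|.
    apply/card_gt0P; exists set0; rewrite inE.
    by apply/forallP => x; rewrite inE.
  case: (@eq_bigmax_cond _ [pred X : {set T} | is_indep e X] (fun X => #|X|) H0) => X HX HXe.
  by exists X => //; rewrite /alpha HXe.
have Hq : 1 < q.-1 by by case: q hq HG Hmin => [|[|[|[|]]]].
have H := new_graph HA HG Hq.
have := Fv_le (transport H); rewrite card_option => HF.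
rewrite -Hmin Hal leq_subLR -(cardS A) addnA add1n leq_add2r //.
Qed.
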